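(* Consider Cobb--Douglas exchange economies with $n$ agents and $m$ commodities such that every agent owns a strictly positive amount of every commodity ($e_{ij}>0$ for all $i\in[n]$, $j\in[m]$) and strong competitiveness holds both for the truthful and for the misreported profile (for every commodity $j$ there is an agent $k$ with $\alpha_{kj}>0$, and for every $j$ there is an agent $k$ with $\alpha'_{kj}>0$, where $\alpha'$ denotes the reported exponents when agent $i$ misreports). Then the incentive ratio is at most $m$: for every such economy, agent $i$ and misreport $u_i'$, $$\frac{u_i(x_i')}{u_i(x_i)}\le m,$$ where $x$ and $x'$ are the competitive equilibrium allocations under truthful reporting and under the misreport, respectively.
   Context: An exchange economy with $n$ agents and $m$ commodities is a tuple $((u_i)_{i=1}^n,(e_i)_{i=1}^n)$, with $u_i:\mathbb{R}_+^m\to\mathbb{R}$ and endowments $e_i\in\mathbb{R}_+^m$; without loss of generality $e_i\in[0,1]^m$ and $\sum_i e_{ij}=1$ for each $j$. Cobb--Douglas utilities are $u_k(x)=\prod_{j=1}^m x_j^{\alpha_{kj}}$ with $0\le\alpha_{kj}\le1$, $\sum_j\alpha_{kj}=1$. Given prices $p$, agent $k$'s demand is the set of maximizers of $u_k(x_k)$ subject to $p\cdot x_k\le p\cdot e_k$, $x_k\ge0$. A competitive equilibrium is a pair $(p,x)$ with markets clearing and each $x_k$ in agent $k$'s demand at $p$; under the stated assumptions the equilibrium price is unique (up to scaling) and positive. In the misreported scenario agent $i$ reports a Cobb--Douglas utility $u_i'$ with exponents $\alpha_i'$ while all others report truthfully, yielding equilibrium allocation $x'$, and $x_i'$ is evaluated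 with the true $u_i$. The incentive ratio is the supremum of $u_i(x_i')/u_i(x_i)$ over all such economies, agents and misreports. *)

(* Defs.v *)
From HB Require Import structures.
From mathcomp Require Import all_boot all_order all_algebra.
From mathcomp Require Import all_classical all_reals exp.
Set Implicit Arguments. Unset Strict Implicit. Unset Printing Implicit Defensive.
Import Order.TTheory GRing.Theory Num.Theory.
Local Open Scope ring_scope.

(* Cobb-Douglas utility with exponent vector a: prod_j x_j^(a_j)
   (powR convention: 0 `^ 0 = 1). *)
Definition cobb_douglas (R : realType) (m : nat) (a : 'I_m -> R) (x : 'I_m -> R) : R :=
  \prod_(j < m) (x j `^ a j).

Definition cd_exponents (R : realType) (m : nat) (a : 'I_m -> R) : Prop :=
  (forall j, 0 <= a j <= 1) /\ \sum_(j < m) a j = 1.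

Definition budget_set (R : realType) (m : nat) (p w y : 'I_m -> R) : Prop :=
  (forall j, 0 <= y j) /\ \sum_(j < m) p j * y j <= \sum_(j < m) p j * w j.

Definition in_demand (R : realType) (m : nat) (u : ('I_m -> R) -> R)
    (p w y : 'I_m -> R) : Prop :=
  budget_set p w y /\ forall z, budget_set p w z -> u z <= u y.

Definition competitive_equilibrium (R : realType) (n m : nat)
    (alpha : 'I_n -> 'I_m -> R) (e : 'I_n -> 'I_m -> R)
    (p : 'I_m -> R) (x : 'I_n -> 'I_m -> R) : Prop :=
  [/\ (forall j, 0 <= p j), (exists j, p j != 0),
      (forall j, \sum_(k < n) x k j = \sum_(k < n) e k j)
    & forall k, in_demand (cobb_douglas (alpha k)) p (e k) (x k)].

Definition strongly_competitive (R : realType) (n m : nat)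
    (alpha : 'I_n -> 'I_m -> R) : Prop :=
  forall j : 'I_m, exists k : 'I_n, 0 < alpha k j.

Definition misreport (R : realType) (n m : nat) (alpha : 'I_n -> 'I_m -> R)
    (i : 'I_n) (a' : 'I_m -> R) : 'I_n -> 'I_m -> R :=
  fun k => if k == i then a' else alpha k.

(* Main.v *)
Require Import Defs.
From HB Require Import structures.
From mathcomp Require Import all_boot all_order all_algebra.
From mathcomp Require Import all_classical all_reals exp.
From mathcomp Require Import ring lra.
Import Order.TTheory GRing.Theory Num.Theory.
Local Open Scope ring_scope.

Lemma ln_prod (R : realType) (I : Type) (s : seq I) (F : I -> R) :
  (forall x, 0 < F x) -> ln (\prod_(x <- s) F x) = \sum_(x <- s) ln (F x).
Proof.
move=> F0; elim: s => [|a s IH]; first by rewrite !big_nil ln1.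
rewrite !big_cons lnM ?IH // posrE ?F0 //; exact: prodr_gt0.
Qed.

Lemma ln_le_sq (R : realType) (t : R) : 0 < t ->
  ln t <= t - 1 - (Num.sqrt t - 1) ^+ 2.
Proof.
move=> t0; set s := Num.sqrt t.
have s0 : 0 < s by rewrite /s sqrtr_gt0.
have ts : t = s ^+ 2 by rewrite /s sqr_sqrtr // ltW.
rewrite ts lnXn //.
have : ln s <= s - 1.
  have h1 : -1 < s - 1 by lra.
  by have := le_ln1Dx h1; rewrite addrC subrK.
move=> h; rewrite mulr2n.
have -> : s ^+ 2 - 1 - (s - 1) ^+ 2 = (s - 1) + (s - 1) by ring.
exact: lerD.
Qed.

Lemma demand_char (R : realType) m (a p w y : 'I_m -> R) :
  cd_exponents a -> (forall l, 0 < p l) -> 0 < \sum_l p l * w l ->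
  in_demand (cobb_douglas a) p w y ->
  forall l, p l * y l = a l * \sum_l p l * w l.
Proof.
move=> [a01 a1] p0 B0 [[y0 yB] ymax].
set B := \sum_l p l * w l in B0 yB *.
have a0 l : 0 <= a l by case/andP: (a01 l).
pose z l := a l * B / p l.
have pz l : p l * z l = a l * B by rewrite /z mulrC divfK // lt0r_neq0.
have z0 l : 0 <= z l by rewrite /z divr_ge0 // ?mulr_ge0 // ltW.
have zB : budget_set p w z.
  split=> //; rewrite (eq_bigr (fun l => a l * B)); last by move=> l _; exact: pz.
  by rewrite -mulr_suml a1 mul1r.
have uz0 : 0 < cobb_douglas a z.
  apply: prodr_gt0 => l _; have [->|ha] := eqVneq (a l) 0; first by rewrite powRr0 ltr01.
  apply: powR_gt0; rewrite /z divr_gt0 // mulr_gt0 //.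
  by rewrite lt0r ha a0.
have uzy := ymax z zB.
have uy0 : 0 < cobb_douglas a y by exact: lt_le_trans uzy.
have ypos l : a l != 0 -> 0 < y l.
  move=> ha; rewrite lt0r y0 andbT; apply/eqP => ye.
  by move: uy0; rewrite /cobb_douglas (bigD1 l) //= ye powR0 // mul0r ltxx.
pose t l := p l * y l / (a l * B).
have hl q : ln (y q `^ a q) - ln (z q `^ a q) <=
            p q * y q / B - a q - a q * (Num.sqrt (t q) - 1) ^+ 2.
  have [ha|ha] := eqVneq (a q) 0.
    rewrite ha !powRr0 ln1 subrr !mul0r !subr0.
    by rewrite divr_ge0 // ?mulr_ge0 // ?ltW.
  have alp : 0 < a q by rewrite lt0r ha a0.
  have yl := ypos q ha.
  have zl : 0 < z q by rewrite /z divr_gt0 // mulr_gt0.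
  have tl : t q = y q / z q.
    rewrite /t /z; field; apply/and3P; split; by apply: lt0r_neq0.
  have tl0 : 0 < t q by rewrite tl divr_gt0.
  rewrite !ln_powR -mulrBr -ln_div ?posrE // -tl.
  have h := ler_wpM2l (a0 q) (@ln_le_sq _ _ tl0).
  apply: le_trans h _; rewrite le_eqVlt; apply/orP; left; apply/eqP.
  rewrite /t; field; apply/andP; split; by apply: lt0r_neq0.
have fy l : 0 < y l `^ a l.
  have [->|ha] := eqVneq (a l) 0; first by rewrite powRr0 ltr01.
  by apply: powR_gt0; apply: ypos.
have fz l : 0 < z l `^ a l.
  have [->|ha] := eqVneq (a l) 0; first by rewrite powRr0 ltr01.
  apply: powR_gt0; rewrite /z divr_gt0 // mulr_gt0 //.
  by rewrite lt0r ha a0.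
set S := \sum_l p l * y l in yB.
set Q := \sum_l a l * (Num.sqrt (t l) - 1) ^+ 2.
have hsum : 0 <= S / B - 1 - Q.
  have h0 : 0 <= ln (cobb_douglas a y) - ln (cobb_douglas a z).
    by rewrite subr_ge0 ler_ln ?posrE.
  apply: (le_trans h0).
  rewrite /cobb_douglas !(@ln_prod R) // -sumrB.
  apply: le_trans (ler_sum _ (fun l _ => hl l)) _.
  rewrite !sumrB a1 /S /Q mulr_suml.
  by rewrite lexx.
have Q0 : 0 <= Q.
  by apply: sumr_ge0 => l _; apply: mulr_ge0 => //; apply: sqr_ge0.
have SB : S / B <= 1 by rewrite ler_pdivrMr // mul1r.
have QQ : Q = 0 by lra.
have SB1 : S = B.
  apply/eqP; rewrite eq_le yB /=.
  have : 1 <= S / B by lra.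
  by rewrite ler_pdivlMr // mul1r.
have hQ := psumr_eq0P (fun l _ => mulr_ge0 (a0 l) (sqr_ge0 (Num.sqrt (t l) - 1))) QQ.
have pos l : a l != 0 -> p l * y l = a l * B.
  move=> ha; have := hQ l isT; move/eqP; rewrite mulf_eq0 (negbTE ha) /= sqrf_eq0 subr_eq0.
  move=> /eqP st.
  have : t l = 1 by rewrite -[t l]sqr_sqrtr ?st ?expr1n // /t divr_ge0 ?mulr_ge0 // ltW.
  have nz : a l * B != 0 by rewrite mulf_neq0 // lt0r_neq0.
  have := divfK nz (p l * y l); rewrite -/(t l) => h1 h2; by rewrite -h1 h2 mul1r.
have hT : \sum_l (p l * y l - a l * B) = 0.
  by rewrite sumrB -mulr_suml a1 mul1r -/S SB1 subrr.
have hT0 l : (true : bool) -> 0 <= p l * y l - a l * B.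
  move=> _; have [ha|ha] := eqVneq (a l) 0.
    by rewrite ha mul0r subr0 mulr_ge0 // ltW.
  by rewrite pos // subrr.
move=> l; apply/eqP; rewrite -subr_eq0; apply/eqP.
exact: (psumr_eq0P hT0 hT).
Qed.

Lemma price_pos (R : realType) n m (alpha e : 'I_n -> 'I_m -> R) p x :
  (forall k, cd_exponents (alpha k)) -> (forall k j, 0 < e k j) ->
  strongly_competitive alpha -> competitive_equilibrium alpha e p x ->
  forall j, 0 < p j.
Proof.
move=> hal he hsc [p0 [j0 pj0] _ hdem] j.
rewrite lt0r p0 andbT; apply/negP => /eqP pj.
have [k hk] := hsc j.
have [[y0 yB] ymax] := hdem k.
have a0 l : 0 <= alpha k l by case: (hal k) => /(_ l) /andP [].
have ue : 0 < cobb_douglas (alpha k) (e k).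
  by apply: prodr_gt0 => l _; apply: powR_gt0.
have uy : 0 < cobb_douglas (alpha k) (x k).
  apply: (lt_le_trans ue); apply: ymax; split=> // l; exact: ltW.
pose y' l := if l == j then x k l + 1 else x k l.
have : cobb_douglas (alpha k) y' <= cobb_douglas (alpha k) (x k).
  apply: ymax; split.
    by move=> l; rewrite /y'; case: eqP => _ //; apply: addr_ge0.
  apply: le_trans yB; rewrite le_eqVlt; apply/orP; left; apply/eqP.
  by apply: eq_bigr => l _; rewrite /y'; case: eqP => [->|] //; rewrite pj !mul0r.
rewrite /cobb_douglas (bigD1 j) //= [X in _ <= X](bigD1 j) //=.
rewrite (eq_bigr (fun l => x k l `^ alpha k l)); last first.
  by move=> l /negbTE hl; rewrite /y' hl.
rewrite /y' eqxx.
set P := \prod_(l < m | l != j) _.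
have P0 : 0 < P.
  rewrite lt0r prodr_ge0 ?andbT //; last by move=> *; apply: powR_ge0.
  apply/eqP => P0; move: uy; rewrite /cobb_douglas (bigD1 j) //= -/P P0 mulr0 ltxx.
  done.
rewrite ler_pM2r // leNgt => /negP; apply.
apply: gt0_ltr_powR => //; rewrite ?nnegrE ?ltrDl ?ltr01 //.
by apply: addr_ge0.
Qed.
Lemma key_ineq (R : realType) n m (E A A' : 'I_n -> 'I_m -> R) (i : 'I_n) (j : 'I_m)
  (b b' : 'I_n -> R) (p p' : 'I_m -> R) :
  (forall k l, 0 <= E k l) -> (forall l, \sum_k E k l <= 1) ->
  (forall k l, 0 <= A' k l) -> (forall k, \sum_l A' k l <= 1) ->
  (forall k l, k != i -> A' k l = A k l) -> (forall l, 0 <= A i l) ->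
  (forall k, b k = \sum_l p l * E k l) -> (forall k, b' k = \sum_l p' l * E k l) ->
  (forall l, p l = \sum_k A k l * b k) -> (forall l, p' l = \sum_k A' k l * b' k) ->
  0 <= p' j -> 0 <= b i ->
  A' i j * b' i * p j <= b i * p' j.
Proof.
move=> E0 E1 A'0 A'1 AA' A0 hb hb' hp hp' p'j0 bi0.
set c := p' j * b i.
have c0 : 0 <= c by apply: mulr_ge0.
pose d k := p j * b' k - p' j * b k.
pose g l := p j * p' l - p' j * p l.
have hd k : d k = \sum_l E k l * g l.
  rewrite /d /g hb hb' !mulr_sumr -sumrB; apply: eq_bigr => l _; ring.
have hg l : g l = \sum_k A' k l * d k + c * (A' i l - A i l).
  have h1 : \sum_k A' k l * b k = \sum_k A k l * b k + (A' i l - A i l) * b i.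
    rewrite (bigD1 i) //= [in RHS](bigD1 i) //=.
    rewrite (eq_bigr (fun k => A k l * b k)); last by move=> k /AA' ->.
    ring.
  have -> : \sum_k A' k l * d k = p j * \sum_k A' k l * b' k - p' j * \sum_k A' k l * b k.
    rewrite /d !mulr_sumr -sumrB; apply: eq_bigr => k _; ring.
  rewrite -hp' h1 -hp /g /c; ring.
pose dp k := Num.max (d k) 0.
pose chi l : R := if 0 < g l then 1 else 0.
have dp0 k : 0 <= dp k by rewrite /dp le_max lexx orbT.
have ddp k : d k <= dp k by rewrite /dp le_max lexx.
have chi0 l : 0 <= chi l by rewrite /chi; case: ifP.
have chi1 l : chi l <= 1 by rewrite /chi; case: ifP.
have chig l : chi l * g l = Num.max (g l) 0.
  rewrite /chi; case: ifP => h.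
    by rewrite mul1r; apply/esym/max_idPl/ltW.
  by rewrite mul0r; apply/esym/max_idPr; rewrite leNgt h.
have step1 : \sum_k dp k <= \sum_l chi l * g l.
  apply: (@le_trans _ _ (\sum_k \sum_l E k l * (chi l * g l))).
    apply: ler_sum => k _; rewrite /dp ge_max; apply/andP; split.
      rewrite hd; apply: ler_sum => l _; apply: ler_wpM2l => //.
      by rewrite chig le_max lexx.
    apply: sumr_ge0 => l _; apply: mulr_ge0 => //.
    by rewrite chig le_max lexx orbT.
  rewrite exchange_big /=; apply: ler_sum => l _.
  rewrite -mulr_suml mulrC; apply: ler_piMr.
    by rewrite chig le_max lexx orbT.
  exact: E1.
pose aG k := \sum_l chi l * A' k l.
have step2 : \sum_l chi l * g l <= \sum_k dp k * aG k + c * aG i.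
  apply: (@le_trans _ _ (\sum_l chi l * (\sum_k A' k l * dp k + c * A' i l))).
    apply: ler_sum => l _; apply: ler_wpM2l => //.
    rewrite hg; apply: lerD.
      by apply: ler_sum => k _; apply: ler_wpM2l.
    by apply: ler_wpM2l => //; rewrite lerBlDr lerDl.
  rewrite (eq_bigr (fun l => \sum_k chi l * A' k l * dp k + c * (chi l * A' i l))); last first.
    by move=> l _; rewrite mulrDr mulr_sumr; congr (_ + _); [apply: eq_bigr => k _|]; ring.
  rewrite big_split /= exchange_big /= -mulr_sumr /aG; apply: lerD => //.
  rewrite le_eqVlt; apply/orP; left; apply/eqP; apply: eq_bigr => k _; by rewrite mulrC mulr_suml.
have aG1 k : aG k <= 1.
  apply: le_trans (A'1 k); apply: ler_sum => l _.
  by rewrite ler_piMl.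
have step3 : dp i * (1 - aG i) <= c * aG i.
  have h : \sum_k dp k * (1 - aG k) <= c * aG i.
    rewrite (eq_bigr (fun k => dp k - dp k * aG k)); last by move=> k _; ring.
    rewrite sumrB lerBlDr addrC; exact: le_trans step1 step2.
  apply: le_trans h; rewrite (bigD1 i) //= lerDl; apply: sumr_ge0 => k _.
  by apply: mulr_ge0 => //; rewrite subr_ge0.
have gj : g j = 0 by rewrite /g; ring.
have aGi : aG i + A' i j <= 1.
  apply: le_trans (A'1 i).
  rewrite /aG (bigD1 j) //= [X in _ <= X](bigD1 j) //= /chi gj ltxx mul0r add0r addrC.
  apply: lerD => //.
  by apply: ler_sum => l _; apply: ler_piMl; [apply: A'0 | apply: (chi1 l)].
have fin : A' i j * d i <= c * (1 - A' i j).
  apply: (@le_trans _ _ (A' i j * dp i)); first by apply: ler_wpM2l.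
  apply: (@le_trans _ _ (dp i * (1 - aG i))).
    by rewrite mulrC; apply: ler_wpM2l => //; lra.
  apply: le_trans step3 _; apply: ler_wpM2l => //; lra.
move: fin; rewrite /d /c; nra.
Qed.

Lemma prod_powR (R : realType) m (c : R) (a : 'I_m -> R) : 0 < c ->
  \prod_(l < m) c `^ a l = c `^ (\sum_(l < m) a l).
Proof.
move=> c0; apply: (big_rec2 (fun u v => u = c `^ v)); first by rewrite powRr0.
by move=> l s1 s2 _ ->; rewrite powRD // lt0r_neq0 ?implybT.
Qed.

Theorem theorem1 (R : realType) (n m : nat)
    (alpha : 'I_n -> 'I_m -> R) (e : 'I_n -> 'I_m -> R)
    (i : 'I_n) (a' : 'I_m -> R)
    (p : 'I_m -> R) (x : 'I_n -> 'I_m -> R)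
    (p' : 'I_m -> R) (x' : 'I_n -> 'I_m -> R) :
  (forall k, cd_exponents (alpha k)) ->
  (forall k j, 0 < e k j) ->
  (forall j, \sum_(k < n) e k j = 1) ->
  cd_exponents a' ->
  strongly_competitive alpha ->
  strongly_competitive (misreport alpha i a') ->
  competitive_equilibrium alpha e p x ->
  competitive_equilibrium (misreport alpha i a') e p' x' ->
  cobb_douglas (alpha i) (x' i) <= m%:R * cobb_douglas (alpha i) (x i).
Proof.
move=> hal he he1 ha' hsc hsc' ceq ceq'.
set al' := misreport alpha i a' in hsc' ceq'.
have hal' k : cd_exponents (al' k) by rewrite /al' /misreport; case: eqP.
have pp := @price_pos _ _ _ _ _ _ _ hal he hsc ceq.
have pp' := @price_pos _ _ _ _ _ _ _ hal' he hsc' ceq'.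
case: ceq => _ _ hclr hdem; case: ceq' => _ _ hclr' hdem'.
have [j0 _] : exists j : 'I_m, true.
  case: (pickP (fun _ : 'I_m => true)) => [j _|h]; first by exists j.
  case: (hal i) => _; rewrite big1 => [/eqP|j]; last by have := h j.
  by rewrite eq_sym oner_eq0.
pose B k := \sum_l p l * e k l.
pose B' k := \sum_l p' l * e k l.
have B0 k : 0 < B k.
  apply: (lt_le_trans (mulr_gt0 (pp j0) (he k j0))).
  rewrite /B (bigD1 j0) //= lerDl; apply: sumr_ge0 => l _.
  by apply: mulr_ge0; apply: ltW.
have B0' k : 0 < B' k.
  apply: (lt_le_trans (mulr_gt0 (pp' j0) (he k j0))).
  rewrite /B' (bigD1 j0) //= lerDl; apply: sumr_ge0 => l _.
  by apply: mulr_ge0; apply: ltW.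
have hx k l : p l * x k l = alpha k l * B k.
  exact: (@demand_char _ _ _ _ _ _ (hal k) pp (B0 k) (hdem k) l).
have hx' k l : p' l * x' k l = al' k l * B' k.
  exact: (@demand_char _ _ _ _ _ _ (hal' k) pp' (B0' k) (hdem' k) l).
have hp l : p l = \sum_k alpha k l * B k.
  rewrite -[LHS]mulr1 -(he1 l) -hclr mulr_sumr.
  by apply: eq_bigr => k _; rewrite hx.
have hp' l : p' l = \sum_k al' k l * B' k.
  rewrite -[LHS]mulr1 -(he1 l) -hclr' mulr_sumr.
  by apply: eq_bigr => k _; rewrite hx'.
have ale k l : 0 <= alpha k l by case: (hal k) => /(_ l) /andP [].
have ale' k l : 0 <= al' k l by case: (hal' k) => /(_ l) /andP [].
have alsum' k : \sum_l al' k l <= 1 by case: (hal' k) => _ ->.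
have hkey j : al' i j * B' i * p j <= B i * p' j.
  apply: (@key_ineq _ _ _ (fun k l => e k l) alpha al' i j B B' p p') => //.
  - by move=> k l; apply: ltW.
  - by move=> l; rewrite he1.
  - by move=> k l hk; rewrite /al' /misreport (negbTE hk).
  - exact: ltW.
  - exact: ltW.
have hpx j : p j * x' i j <= B i.
  rewrite -(ler_pM2r (pp' j)) -mulrA [x' i j * _]mulrC hx'.
  by apply: le_trans (hkey j); rewrite le_eqVlt; apply/orP; left; apply/eqP; ring.
have m0 : 0 < (m%:R : R).
  rewrite ltr0n; by case: m j0 {hal hal' ha' hsc hsc' he he1 hdem hdem' hclr hclr' x x' alpha al' a' p p' e pp pp' B B' B0 B0' hx hx' hp hp' ale ale' alsum' hkey hpx} => [[]|].
pose z l := x' i l / m%:R.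
have [[xi0 _] _] := hdem' i.
have zB : budget_set p (e i) z.
  split.
    by move=> l; rewrite /z divr_ge0 // ltW.
  rewrite (eq_bigr (fun l => (p l * x' i l) / m%:R)); last by move=> l _; rewrite /z mulrA.
  rewrite -mulr_suml ler_pdivrMr //.
  apply: (le_trans (ler_sum _ (fun l _ => hpx l))).
  by rewrite sumr_const card_ord mulr_natr.
have := (hdem i).2 z zB.
have -> : cobb_douglas (alpha i) z = cobb_douglas (alpha i) (x' i) / m%:R.
  rewrite /cobb_douglas /z.
  rewrite (eq_bigr (fun l => x' i l `^ alpha i l * (m%:R^-1) `^ alpha i l)); last first.
    by move=> l _; rewrite powRM // invr_ge0 ltW.
  rewrite big_split /= prod_powR ?invr_gt0 //.
  by case: (hal i) => _ ->; rewrite powRr1 // invr_ge0 ltW.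
by rewrite ler_pdivrMr // mulrC.
Qed.
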